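(* Let $B\in\mathbb{R}^{k\times k}$ be symmetric positive definite, $D\in\mathbb{R}^{m\times k}$ of full row rank, $A\in\mathbb{R}^{k\times k}$, $C:\mathbb{R}^k\to\mathbb{R}^{k\times k}$, $\Pi=I-B^{-1}D^T(DB^{-1}D^T)^{-1}D$. Let $h>0$, $y_n\in\mathbb{R}^k$ with $Dy_n=0$, and real coefficients $a_{i,j}$ ($i=1,\dots,s+1$, $j\le i$, with $a_{s+1,s+1}=0$) and $\alpha^k_{i,\gamma}$ ($\gamma=1,\dots,J$). Suppose $Y_1,\dots,Y_{s+1}\in\mathbb{R}^k$ satisfy, for $i=1,\dots,s+1$, $$Y_i=\varphi_i y_n+h\sum_{j=1}^{i-1}a_{i,j}\,\varphi_i\varphi_j^{-1}\,\Pi B^{-1}AY_j+h\,a_{i,i}\,\Pi B^{-1}AY_i,$$ where $Y_i^\gamma:=\sum_k\alpha^k_{i,\gamma}Y_k$ and $\varphi_i:=\exp\!\big(h\Pi B^{-1}C(Y_i^J)\big)\cdots\exp\!\big(h\Pi B^{-1}C(Y_i^1)\big)$ (matrix exponentials). Then $DY_i=0$ for all $i$, and in particular $y_{n+1}:=Y_{s+1}$ satisfies $Dy_{n+1}=0$.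
   Context: This is a DIRK-CF method (a diagonally implicit Runge–Kutta method for the diffusion combined with a commutator-free exponential integrator for the convection, the exponentials being products of exponentials of linear combinations of stage convection operators) applied to the projected semi-discrete Navier–Stokes ODE $\dot y=\Pi B^{-1}Ay+\Pi B^{-1}C(y)y$. *)

(* Defs.v *)
From Stdlib Require Import Reals ClassicalEpsilon FunctionalExtensionality.
From HB Require Import structures.
From mathcomp Require Import all_boot all_order all_algebra.
Set Implicit Arguments. Unset Strict Implicit. Unset Printing Implicit Defensive.

Definition R_eqb (x y : R) : bool := if Req_dec_T x y then true else false.
Lemma R_eqP : Equality.axiom R_eqb.
Proof. by move=> x y; rewrite /R_eqb; case: Req_dec_T => h; constructor. Qed.
HB.instance Definition _ := hasDecEq.Build R R_eqP.

Definition R_find (P : pred R) (n : nat) : option R :=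
  match excluded_middle_informative (exists x, P x) with
  | left h => Some (proj1_sig (constructive_indefinite_description _ h))
  | right _ => None
  end.
Lemma R_find_correct P n x : R_find P n = Some x -> P x.
Proof.
rewrite /R_find; case: excluded_middle_informative => // h [<-].
exact: (proj2_sig (constructive_indefinite_description _ h)).
Qed.
Lemma R_find_complete (P : pred R) : (exists x, P x) -> exists n, R_find P n.
Proof. by move=> h; exists 0%N; rewrite /R_find; case: excluded_middle_informative. Qed.
Lemma R_find_ext (P Q : pred R) : P =1 Q -> R_find P =1 R_find Q.
Proof. by move=> /functional_extensionality ->. Qed.
HB.instance Definition _ := hasChoice.Build R R_find_correct R_find_complete R_find_ext.

Lemma R_addA : forall x y z : R, Rplus x (Rplus y z) = Rplus (Rplus x y) z. Proof. by move=> x y z; rewrite Rplus_assoc. Qed.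
Lemma R_addC : forall x y : R, Rplus x y = Rplus y x. Proof. exact: Rplus_comm. Qed.
Lemma R_add0 : forall x : R, Rplus R0 x = x. Proof. exact: Rplus_0_l. Qed.
Lemma R_addN : forall x : R, Rplus (Ropp x) x = R0. Proof. exact: Rplus_opp_l. Qed.
HB.instance Definition _ := GRing.isZmodule.Build R R_addA R_addC R_add0 R_addN.

Lemma R_mulA : forall x y z : R, Rmult x (Rmult y z) = Rmult (Rmult x y) z. Proof. by move=> x y z; rewrite Rmult_assoc. Qed.
Lemma R_mulC : forall x y : R, Rmult x y = Rmult y x. Proof. exact: Rmult_comm. Qed.
Lemma R_mul1 : forall x : R, Rmult R1 x = x. Proof. exact: Rmult_1_l. Qed.
Lemma R_mulDl : forall x y z : R, Rmult (Rplus x y) z = Rplus (Rmult x z) (Rmult y z). Proof. exact: Rmult_plus_distr_r. Qed.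
Lemma R_one_neq0 : (R1 : R) != (R0 : R). Proof. by apply/R_eqP; exact: R1_neq_R0. Qed.
HB.instance Definition _ :=
  GRing.Zmodule_isComNzRing.Build R R_mulA R_mulC R_mul1 R_mulDl R_one_neq0.

Lemma R_mulVf (x : R) : x != R0 -> Rmult (Rinv x) x = R1.
Proof. by move=> /R_eqP h; exact: Rinv_l. Qed.
HB.instance Definition _ := GRing.ComNzRing_isField.Build R R_mulVf Rinv_0.

Local Open Scope ring_scope.

Definition spd (k : nat) (B : 'M[R]_k) : Prop :=
  B^T = B /\ forall v : 'cV[R]_k, v != 0 -> Rlt R0 ((v^T *m B *m v) 0 0).

Definition full_row_rank (m k : nat) (D : 'M[R]_(m, k)) : Prop := \rank D = m.

Definition proj_Pi (m k : nat) (B : 'M[R]_k) (D : 'M[R]_(m, k)) : 'M[R]_k :=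
  1%:M - invmx B *m D^T *m invmx (D *m invmx B *m D^T) *m D.

Definition exp_partial (k : nat) (M : 'M[R]_k) (N : nat) : 'M[R]_k :=
  \sum_(n < N.+1) (n`!%:R)^-1 *: M ^+ n.
Definition is_mexp (k : nat) (M E : 'M[R]_k) : Prop :=
  forall i j, Un_cv (fun N => exp_partial M N i j) (E i j).
Definition mexp (k : nat) (M : 'M[R]_k) : 'M[R]_k :=
  match excluded_middle_informative (exists E, is_mexp M E) with
  | left h => proj1_sig (constructive_indefinite_description _ h)
  | right _ => 0
  end.

(* Main.v *)
Require Import Defs.
From Stdlib Require Import Reals ClassicalEpsilon FunctionalExtensionality.
From HB Require Import structures.
From mathcomp Require Import all_boot all_order all_algebra.
Import GRing.Theory.
Local Open Scope ring_scope.

Lemma sum_cv n (f : 'I_n -> nat -> R) (L : 'I_n -> R) :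
  (forall l, Un_cv (f l) (L l)) -> Un_cv (fun N => \sum_(l < n) f l N) (\sum_(l < n) L l).
Proof.
elim: n f L => [|n IH] f L H.
  rewrite big_ord0.
  have -> : (fun N => \sum_(l < 0) f l N) = (fun _ => 0) by apply: functional_extensionality => N; rewrite big_ord0.
  move=> e he; exists 0%N => N _; rewrite /R_dist Rminus_diag Rabs_R0; exact: he.
have -> : (fun N => \sum_(l < n.+1) f l N) = (fun N => \sum_(l < n) f (widen_ord (leqnSn n) l) N + f ord_max N).
  by apply: functional_extensionality => N; rewrite big_ord_recr.
rewrite big_ord_recr.
apply: CV_plus; last exact: H.
by apply: IH => l; apply: H.
Qed.

Lemma cst_cv (c : R) : Un_cv (fun _ => c) c.
Proof. move=> e he; exists 0%N => N _; rewrite /R_dist Rminus_diag Rabs_R0; exact: he. Qed.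

Lemma mexp_D k m (D : 'M[R]_(m, k)) (M : 'M[R]_k) :
  D *m M = 0 -> exists c : R, D *m mexp M = c *: D.
Proof.
move=> DM.
have Dp : forall N, D *m exp_partial M N = D.
  move=> N; rewrite /exp_partial mulmx_sumr big_ord_recl big1.
    by rewrite addr0 /= expr0 fact0 invr1 scale1r mulmx1.
  move=> i _; rewrite -scalemxAr /= exprS -mulmxE mulmxA DM mul0mx scaler0 //.
rewrite /mexp; case: excluded_middle_informative => [hE|_]; last first.
  by exists 0; rewrite mulmx0 scale0r.
exists 1; rewrite scale1r.
case: (constructive_indefinite_description _ hE) => E HE /=.
apply/matrixP => i j.
apply: (UL_sequence (fun N => (D *m exp_partial M N) i j)).
  rewrite !mxE.
  have -> : (fun N => (D *m exp_partial M N) i j) = (fun N => \sum_(l < k) (D i l * exp_partial M N l j)).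
    by apply: functional_extensionality => N; rewrite mxE.
  apply: sum_cv => l; apply: CV_mult; [exact: cst_cv | exact: HE].
have -> : (fun N => (D *m exp_partial M N) i j) = (fun _ => D i j).
  by apply: functional_extensionality => N; rewrite Dp.
exact: cst_cv.
Qed.

Lemma spd_unit k (B : 'M[R]_k) : spd B -> B \in unitmx.
Proof.
case=> _ pd; rewrite -row_free_unit; apply: inj_row_free => v vB.
apply/eqP; apply/negPn/negP => nv.
have nt : v^T != 0 by apply: contra nv => /eqP h; rewrite -(trmxK v) h trmx0.
have := pd _ nt; rewrite trmxK vB mul0mx mxE => /Rlt_irrefl.
done.
Qed.

Lemma spd_inv_pd k (B : 'M[R]_k) : spd B -> forall u : 'cV[R]_k, u != 0 ->
  Rlt R0 ((u^T *m invmx B *m u) 0 0).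
Proof.
move=> sB u nu; have uB := @spd_unit _ _ sB; case: sB => sym pd.
have nv : invmx B *m u != 0.
  apply: contra nu => /eqP h; by rewrite -(mul1mx u) -(mulmxV uB) -mulmxA h mulmx0.
have := pd _ nv.
rewrite trmx_mul trmx_inv sym -!mulmxA (mulmxA B) mulmxV // mul1mx.
by rewrite !mulmxA.
Qed.

Lemma DPi k m (B : 'M[R]_k) (D : 'M[R]_(m, k)) :
  spd B -> full_row_rank D -> D *m proj_Pi B D = 0.
Proof.
move=> sB fr.
have uM : D *m invmx B *m D^T \in unitmx.
  rewrite -row_free_unit; apply: inj_row_free => w wM.
  have : (w *m D)^T == 0.
    apply/negPn/negP => nu; have := @spd_inv_pd _ _ sB _ nu.
    rewrite trmxK trmx_mul !mulmxA; rewrite !mulmxA in wM; rewrite wM mul0mx mxE.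
    by move/Rlt_irrefl.
  rewrite trmx_eq0 => /eqP wD.
  have rfD : row_free D by rewrite /row_free fr.
  by apply: (row_free_inj rfD); rewrite wD mul0mx.
rewrite /proj_Pi mulmxBr mulmx1 !mulmxA mulmxV // mul1mx subrr //.
Qed.

Definition Pc k m (D : 'M[R]_(m, k)) (X : 'M[R]_k) := exists c : R, D *m X = c *: D.

Arguments Pc {k m}.

Lemma Pc_mul k m (D : 'M[R]_(m, k)) X Y : Pc D X -> Pc D Y -> Pc D (X *m Y).
Proof.
case=> c hc [d hd]; exists (c * d); by rewrite mulmxA hc -scalemxAl hd scalerA.
Qed.

Arguments Pc_mul {k m D X Y}.

Lemma Pc_inv k m (D : 'M[R]_(m, k)) X : Pc D X -> Pc D (invmx X).
Proof.
move=> [c hc]; case uX: (X \in unitmx); last by rewrite invmx_out ?inE ?uX //; exists c.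
case: (eqVneq c 0) => [c0|cn0].
  have D0 : D = 0 by rewrite -(mulmx1 D) -(mulmxV uX) mulmxA hc c0 scale0r mul0mx.
  by exists 0; rewrite D0 mul0mx scaler0.
exists c^-1.
by rewrite -[in RHS](mulmx1 D) -(mulmxV uX) mulmxA hc -scalemxAl scalerA mulVf // scale1r.
Qed.
Arguments Pc_inv {k m D X}.

Theorem mainTheorem4 (k m s J : nat)
  (B A : 'M[R]_k) (D : 'M[R]_(m, k)) (C : 'cV[R]_k -> 'M[R]_k)
  (h : R) (yn : 'cV[R]_k)
  (a : 'I_s.+1 -> 'I_s.+1 -> R)
  (alpha : 'I_s.+1 -> 'I_s.+1 -> 'I_J -> R)
  (Y : 'I_s.+1 -> 'cV[R]_k) :
  spd B ->
  full_row_rank D ->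
  Rlt R0 h ->
  D *m yn = 0 ->
  a ord_max ord_max = 0 ->
  (let Pi := proj_Pi B D in
   let Yg (i : 'I_s.+1) (g : 'I_J) := \sum_(l < s.+1) alpha l i g *: Y l in
   let phi (i : 'I_s.+1) :=
     \prod_(g < J) mexp (h *: (Pi *m invmx B *m C (Yg i (rev_ord g)))) in
   forall i : 'I_s.+1,
     Y i = phi i *m yn
           + h *: (\sum_(j < s.+1 | (j < i)%N)
                     a i j *: (phi i *m invmx (phi j) *m Pi *m invmx B *m A *m Y j))
           + (h * a i i) *: (Pi *m invmx B *m A *m Y i)) ->
  (forall i : 'I_s.+1, D *m Y i = 0) /\ D *m Y ord_max = 0.
Proof.
move=> sB fr _ Dy _ HY.
have DP := @DPi _ _ _ _ sB fr.
set Pi := proj_Pi B D in HY DP.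
have Pphi : forall i, Pc D (\prod_(g < J) mexp (h *: (Pi *m invmx B *m C (\sum_(l < s.+1) alpha l i (rev_ord g) *: Y l)))).
  move=> i; apply: (big_ind (Pc D)).
  - by exists 1; rewrite scale1r mulmx1.
  - by move=> x y; rewrite -mulmxE; apply: Pc_mul.
  - move=> g _; apply: mexp_D; by rewrite -scalemxAr !mulmxA DP !mul0mx scaler0.
have key : forall i, D *m Y i = 0.
  move=> i; rewrite (HY i) /= !mulmxDr -!scalemxAr mulmx_sumr [\sum_(j < s.+1 | _) _]big1.
    rewrite mulmxA; case: (Pphi i) => c ->; rewrite -scalemxAl Dy scaler0 add0r.
    by rewrite scaler0 add0r !mulmxA DP !mul0mx scaler0.
  move=> j _; rewrite -scalemxAr !mulmxA.
  have [c hc] := Pc_mul (Pphi i) (Pc_inv (Pphi j)).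
  rewrite mulmxA in hc; rewrite hc -!scalemxAl DP !mul0mx !scaler0 //.
by split.
Qed.
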